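(* Let $0<a<1<b$, $\varphi(y)=\max\{y^a,y^b\}$ and $\varphi^{-1}(y)=\min\{y^{1/a},y^{1/b}\}$ for $y>0$, let $c,d>0$ with $cd\le1$, and $g(x)=xF(c,d;c+d;x)$ for $x\in(0,1)$. Then for every $x\in(0,1)$, $$g(x)\le b\,\varphi\!\left(g\!\left(\frac{\varphi^{-1}(x/(1-x))}{1+\varphi^{-1}(x/(1-x))}\right)\right).$$
   Context: $F(a,b;c;x)$ is the Gaussian hypergeometric function $\sum_{n\ge0}\frac{(a)_n(b)_n}{(c)_n}\frac{x^n}{n!}$ ($|x|<1$), with $(a)_n=a(a+1)\cdots(a+n-1)$, $(a)_0=1$. The exponents $a,b$ are distinct from the hypergeometric parameters $c,d$. *)

(* Defs.v *)
From Stdlib Require Import Reals Arith ClassicalEpsilon.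
Open Scope R_scope.

Fixpoint poch (a : R) (n : nat) : R :=
  match n with
  | O => 1
  | S k => poch a k * (a + INR k)
  end.

Definition hyp_term (a b c x : R) (n : nat) : R :=
  poch a n * poch b n / poch c n * x ^ n / INR (fact n).

(* F(a,b;c;x) = sum_{n>=0} hyp_term n  (the series converges for |x|<1,
   where it is used); chosen via classical epsilon as the limit. *)
Definition hypF (a b c x : R) : R :=
  epsilon (inhabits 0) (fun l => infinite_sum (hyp_term a b c x) l).

Definition gfun (c d x : R) : R := x * hypF c d (c + d) x.

Definition phi (a b y : R) : R := Rmax (Rpower y a) (Rpower y b).
Definition phiinv (a b y : R) : R := Rmin (Rpower y (1 / a)) (Rpower y (1 / b)).

(* Main.v *)
Require Import Defs.
From Stdlib Require Import Reals Lra Lia ClassicalEpsilon.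
From Coquelicot Require Import Coquelicot.
Open Scope R_scope.

Lemma radius_one : CV_radius (fun _ => 1) = 1.
Proof.
  rewrite (CV_radius_finite_DAlembert _ 1).
  - now rewrite Rinv_1.
  - intros; lra.
  - lra.
  - eapply is_lim_seq_ext; [|apply is_lim_seq_const].
    intros n; simpl. rewrite Rdiv_1_r, Rabs_R1. reflexivity.
Qed.

Lemma log_pseries z : 0 <= z < 1 ->
  is_pseries (PS_Int (fun _ => 1)) z (- ln (1 - z)).
Proof.
  intros Hz.
  assert (Hr : forall t, 0 <= t <= z -> Rbar_lt (Rabs t) (CV_radius (fun _ => 1))).
  { intros t Ht. rewrite radius_one. simpl. rewrite Rabs_pos_eq; lra. }
  assert (H := is_pseries_RInt (fun _ => 1) z (Hr z ltac:(lra))).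
  replace (- ln (1 - z)) with (RInt (PSeries (fun _ => 1)) 0 z); [exact H|].
  apply is_RInt_unique.
  apply is_RInt_ext with (f := fun t => / (1 - t)).
  { intros t Ht. rewrite Rmin_left in Ht by lra. rewrite Rmax_right in Ht by lra.
    symmetry. apply is_pseries_unique. apply is_pseries_R.
    eapply is_series_ext; [|apply is_series_geom].
    - intros n; simpl. ring.
    - rewrite Rabs_pos_eq; lra. }
  replace (- ln (1 - z)) with (minus (- ln (1 - z)) (- ln (1 - 0))).
  2:{ rewrite Rminus_0_r, ln_1. unfold minus, plus, opp; simpl. ring. }
  apply (is_RInt_derive (fun t => - ln (1 - t))).
  - intros t Ht. rewrite Rmin_left in Ht by lra. rewrite Rmax_right in Ht by lra.
    auto_derive. lra. field. lra.
  - intros t Ht. rewrite Rmin_left in Ht by lra. rewrite Rmax_right in Ht by lra.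
    apply (ex_derive_continuous (V := R_NormedModule) (fun t => / (1 - t))). auto_derive. lra.
Qed.

Lemma infinite_sum_ext (f g : nat -> R) l :
  (forall n, f n = g n) -> infinite_sum f l -> infinite_sum g l.
Proof.
  intros E H eps He. destruct (H eps He) as [N HN]. exists N. intros n Hn.
  rewrite <- (sum_eq f g n) by (intros; apply E). auto.
Qed.

Lemma log_series z : 0 < z < 1 ->
  infinite_sum (fun n => / INR (S n) * z ^ n) (- ln (1 - z) / z).
Proof.
  intros Hz.
  assert (H := is_pseries_decr_1 _ z (/ z) _ ltac:(change (/ z * z = 1); field; lra)
                 (log_pseries z ltac:(lra))).
  apply is_pseries_R in H. apply is_series_Reals in H.
  match type of H with infinite_sum _ ?L =>
    replace (- ln (1 - z) / z) with L end.
  2:{ change (/ z * (- ln (1 - z) + - 0) = - ln (1 - z) / z). field. lra. }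
  eapply infinite_sum_ext; [|exact H].
  - intros n. unfold PS_decr_1, PS_Int. simpl. unfold Rdiv. rewrite Rmult_1_l. reflexivity.

Qed.
Lemma sum_nonpos (f : nat -> R) N : (forall n, (n <= N)%nat -> f n <= 0) -> sum_f_R0 f N <= 0.
Proof.
  induction N; intros H; simpl.
  - apply H; lia.
  - assert (sum_f_R0 f N <= 0) by (apply IHN; intros; apply H; lia).
    assert (f (S N) <= 0) by (apply H; lia). lra.
Qed.

Lemma sum_ident (al be : nat -> R) (x y p q u v : R) N :
  sum_f_R0 (fun m => (p * be m - q * al m) * (u * y ^ m - v * x ^ m)) N =
  p * u * sum_f_R0 (fun m => be m * y ^ m) N - p * v * sum_f_R0 (fun m => be m * x ^ m) N
  - q * u * sum_f_R0 (fun m => al m * y ^ m) N + q * v * sum_f_R0 (fun m => al m * x ^ m) N.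
Proof. induction N; simpl; [ring|]. rewrite IHN. ring. Qed.

Lemma ratio_partial (al be : nat -> R) (x y : R) :
  0 < y <= x ->
  (forall m n, (m <= n)%nat -> al n * be m <= al m * be n) ->
  forall N,
  sum_f_R0 (fun n => al n * x ^ n) N * sum_f_R0 (fun n => be n * y ^ n) N <=
  sum_f_R0 (fun n => al n * y ^ n) N * sum_f_R0 (fun n => be n * x ^ n) N.
Proof.
  intros Hxy Hm N. induction N.
  - simpl. lra.
  - simpl sum_f_R0.
    assert (Hs := sum_ident al be x y (al (S N)) (be (S N)) (x ^ S N) (y ^ S N) N).
    assert (sum_f_R0 (fun m => (al (S N) * be m - be (S N) * al m) * (x ^ S N * y ^ m - y ^ S N * x ^ m)) N <= 0).
    { apply sum_nonpos. intros m Hm'.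
      assert (al (S N) * be m - be (S N) * al m <= 0).
      { assert (H := Hm m (S N) ltac:(lia)). lra. }
      assert (0 <= x ^ S N * y ^ m - y ^ S N * x ^ m).
      { replace (S N) with (m + (S N - m))%nat by lia.
        rewrite !pow_add.
        assert (y ^ (S N - m) <= x ^ (S N - m)) by (apply pow_incr; lra).
        assert (0 <= x ^ m) by (apply pow_le; lra).
        assert (0 <= y ^ m) by (apply pow_le; lra).
        assert (0 <= x ^ m * y ^ m) by (apply Rmult_le_pos; lra).
        nra. }
      nra. }
    rewrite Hs in H.
    set (A1 := sum_f_R0 (fun n => al n * x ^ n) N) in *.
    set (A2 := sum_f_R0 (fun n => al n * y ^ n) N) in *.
    set (B1 := sum_f_R0 (fun n => be n * x ^ n) N) in *.
    set (B2 := sum_f_R0 (fun n => be n * y ^ n) N) in *.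
    change (x * x ^ N) with (x ^ S N). change (y * y ^ N) with (y ^ S N). match goal with |- ?L <= ?R => assert (E : R - L = (A2 * B1 - A1 * B2) -
      (al (S N) * x ^ S N * B2 - al (S N) * y ^ S N * B1 - be (S N) * x ^ S N * A2 + be (S N) * y ^ S N * A1)) by ring end.
    lra.
Qed.

Lemma ratio_lim (al be : nat -> R) (x y Ax Ay Bx By : R) :
  0 < y <= x ->
  (forall m n, (m <= n)%nat -> al n * be m <= al m * be n) ->
  infinite_sum (fun n => al n * x ^ n) Ax ->
  infinite_sum (fun n => al n * y ^ n) Ay ->
  infinite_sum (fun n => be n * x ^ n) Bx ->
  infinite_sum (fun n => be n * y ^ n) By ->
  Ax * By <= Ay * Bx.
Proof.
  intros H1 H2 HAx HAy HBx HBy.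
  eapply Rle_cv_lim.
  - apply (ratio_partial al be x y H1 H2).
  - apply CV_mult; assumption.
  - apply CV_mult; assumption.
Qed.

Lemma exp_le' x y : x <= y -> exp x <= exp y.
Proof. intros [H|H]; [left; apply exp_increasing; auto| subst; lra]. Qed.

Lemma ln_le' x y : 0 < x -> x <= y -> ln x <= ln y.
Proof. intros Hx [H|H]; [left; apply ln_increasing; auto| subst; lra]. Qed.

Lemma poch_pos r n : 0 < r -> 0 < poch r n.
Proof.
  intros Hr; induction n; simpl; [lra|].
  apply Rmult_lt_0_compat; auto. assert (0 <= INR n) by apply pos_INR. lra.
Qed.

Definition Aco (c d : R) (n : nat) : R :=
  poch c n * poch d n / poch (c + d) n / INR (Factorial.fact n).

Lemma INR_fact_pos n : 0 < INR (Factorial.fact n).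
Proof. apply lt_0_INR. apply Factorial.lt_O_fact. Qed.

Lemma Aco_pos c d n : 0 < c -> 0 < d -> 0 < Aco c d n.
Proof.
  intros. unfold Aco. assert (H1 := poch_pos c n H). assert (H2 := poch_pos d n H0).
  assert (H3 := poch_pos (c + d) n ltac:(lra)). assert (H4 := INR_fact_pos n).
  apply Rdiv_lt_0_compat; [|auto]. apply Rdiv_lt_0_compat; [|auto]. nra.
Qed.

Lemma Aco_0 c d : Aco c d 0 = 1.
Proof. unfold Aco; simpl. field. Qed.

Lemma Aco_S c d n : 0 < c -> 0 < d ->
  Aco c d (S n) = Aco c d n * ((c + INR n) * (d + INR n) / ((c + d + INR n) * (INR n + 1))).
Proof.
  intros Hc Hd. unfold Aco. simpl poch.
  replace (Factorial.fact (S n)) with (S n * Factorial.fact n)%nat by reflexivity.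
  rewrite mult_INR, S_INR.
  assert (H3 := poch_pos (c + d) n ltac:(lra)). assert (H4 := INR_fact_pos n).
  assert (0 <= INR n) by apply pos_INR.
  field. repeat split; lra.
Qed.

Lemma cd_bound c d : 0 < c -> 0 < d -> c * d <= 1 -> 2 * (c * d) <= c + d.
Proof.
  intros Hc Hd Hcd.
  destruct (Rle_lt_dec (2 * (c * d)) (c + d)) as [H|H]; auto.
  assert (0 < c * d) by nra.
  assert ((c * d) * (c * d) <= c * d) by nra.
  assert ((c + d) * (c + d) < (2 * (c * d)) * (2 * (c * d))) by (apply Rmult_le_0_lt_compat; lra).
  assert ((c * d) * (c * d) <= c * d) by (assert (H' := Rmult_le_compat_l (c*d) (c*d) 1 ltac:(lra) Hcd); lra).
  assert ((c + d) * (c + d) = (c - d) * (c - d) + 4 * (c * d)) by ring. pose proof (Rle_0_sqr (c - d)); unfold Rsqr in *.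
  lra.
Qed.

Lemma Aco_dec c d n : 0 < c -> 0 < d -> c * d <= 1 -> Aco c d (S n) <= Aco c d n.
Proof.
  intros Hc Hd Hcd. rewrite Aco_S by auto.
  assert (Hp := Aco_pos c d n Hc Hd). assert (0 <= INR n) by apply pos_INR.
  assert (2 * (c * d) <= c + d) by (apply cd_bound; auto).
  assert ((c + INR n) * (d + INR n) / ((c + d + INR n) * (INR n + 1)) <= 1).
  { apply Rmult_le_reg_r with ((c + d + INR n) * (INR n + 1)). nra.
    unfold Rdiv. rewrite Rmult_assoc, Rinv_l by nra. nra. }
  assert (0 <= (c + INR n) * (d + INR n) / ((c + d + INR n) * (INR n + 1))).
  { apply Rcomplements.Rdiv_le_0_compat; nra. }
  nra.
Qed.

Lemma Aco_rdec c d n : 0 < c -> 0 < d -> c * d <= 1 ->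
  INR (S (S n)) * Aco c d (S n) <= INR (S n) * Aco c d n.
Proof.
  intros Hc Hd Hcd. rewrite Aco_S by auto. rewrite !S_INR.
  assert (Hp := Aco_pos c d n Hc Hd). assert (0 <= INR n) by apply pos_INR.
  assert (2 * (c * d) <= c + d) by (apply cd_bound; auto).
  set (k := INR n) in *.
  replace ((k + 1 + 1) * (Aco c d n * ((c + k) * (d + k) / ((c + d + k) * (k + 1)))))
    with (Aco c d n * ((k + 1 + 1) * (c + k) * (d + k) / ((c + d + k) * (k + 1)))) by (field; nra).
  replace ((k + 1) * Aco c d n) with (Aco c d n * ((k + 1) * ((c + d + k) * (k + 1)) / ((c + d + k) * (k + 1)))) by (field; nra).
  apply Rmult_le_compat_l; [lra|].
  unfold Rdiv. apply Rmult_le_compat_r.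
  - left. apply Rinv_0_lt_compat. nra.
  - assert (k * (c * d - 1) <= 0) by nra. nra.
Qed.

Lemma Aco_mono c d m n : 0 < c -> 0 < d -> c * d <= 1 -> (m <= n)%nat ->
  Aco c d n <= Aco c d m /\ INR (S n) * Aco c d n <= INR (S m) * Aco c d m.
Proof.
  intros Hc Hd Hcd Hmn. induction Hmn.
  - lra.
  - destruct IHHmn. split.
    + eapply Rle_trans; [apply Aco_dec|]; auto.
    + eapply Rle_trans; [apply Aco_rdec|]; auto.
Qed.

Lemma Aco_le1 c d n : 0 < c -> 0 < d -> c * d <= 1 -> Aco c d n <= 1.
Proof. intros. rewrite <- (Aco_0 c d). apply (Aco_mono c d 0 n); auto; lia. Qed.

Lemma hyp_sum c d z : 0 < c -> 0 < d -> c * d <= 1 -> 0 < z < 1 ->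
  infinite_sum (fun n => Aco c d n * z ^ n) (hypF c d (c + d) z).
Proof.
  intros Hc Hd Hcd Hz.
  assert (E : forall n, hyp_term c d (c + d) z n = Aco c d n * z ^ n).
  { intros n. unfold hyp_term, Aco. assert (H4 := INR_fact_pos n).
    assert (H3 := poch_pos (c + d) n ltac:(lra)). field. split; lra. }
  assert (Hex : ex_series (fun n => Aco c d n * z ^ n)).
  { apply (ex_series_le (V := R_CompleteNormedModule)) with (b := fun n => z ^ n).
    - intros n. change (Rabs (Aco c d n * z ^ n) <= z ^ n).
      assert (H1 := Aco_pos c d n Hc Hd). assert (H2 := Aco_le1 c d n Hc Hd Hcd).
      assert (0 < z ^ n) by (apply pow_lt; lra).
      rewrite Rabs_pos_eq by nra. nra.
    - apply ex_series_geom. rewrite Rabs_pos_eq; lra. }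
  apply Series_correct in Hex. apply is_series_Reals in Hex.
  assert (Hh : infinite_sum (hyp_term c d (c + d) z) (hypF c d (c + d) z)).
  { unfold hypF. apply epsilon_spec. exists (Series (fun n => Aco c d n * z ^ n)).
    eapply infinite_sum_ext; [|exact Hex]. intros n; rewrite E; reflexivity. }
  eapply infinite_sum_ext; [|exact Hh]. exact E.
Qed.

Lemma F_bounds c d z : 0 < c -> 0 < d -> c * d <= 1 -> 0 < z < 1 ->
  1 <= hypF c d (c + d) z <= / (1 - z).
Proof.
  intros Hc Hd Hcd Hz. assert (H := hyp_sum c d z Hc Hd Hcd Hz). split.
  - apply (@Rle_cv_lim (fun _ => 1) (sum_f_R0 (fun n => Aco c d n * z ^ n))).
    + intros n. induction n; simpl. rewrite Aco_0. lra.
      assert (0 < Aco c d (S n) * (z * z ^ n)).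
      { apply Rmult_lt_0_compat. apply Aco_pos; auto. apply Rmult_lt_0_compat; [lra|apply pow_lt; lra]. }
      lra.
    + intros eps He. exists 0%nat. intros. unfold Rdist. rewrite Rminus_diag, Rabs_R0. lra.
    + exact H.
  - apply (@Rle_cv_lim (sum_f_R0 (fun n => Aco c d n * z ^ n)) (sum_f_R0 (fun n => 1 * z ^ n))).
    + intros n. apply sum_Rle. intros k _. apply Rmult_le_compat_r.
      apply pow_le; lra. apply Aco_le1; auto.
    + exact H.
    + apply GP_infinite. rewrite Rabs_pos_eq; lra.
Qed.

Lemma ratioB c d x y : 0 < c -> 0 < d -> c * d <= 1 -> 0 < y <= x -> x < 1 ->
  hypF c d (c + d) x * / (1 - y) <= hypF c d (c + d) y * / (1 - x).
Proof.
  intros Hc Hd Hcd Hy Hx.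
  apply (ratio_lim (Aco c d) (fun _ => 1) x y); auto.
  - intros m n Hmn. destruct (Aco_mono c d m n Hc Hd Hcd Hmn). lra.
  - apply hyp_sum; auto; lra.
  - apply hyp_sum; auto; lra.
  - apply GP_infinite. rewrite Rabs_pos_eq; lra.
  - apply GP_infinite. rewrite Rabs_pos_eq; lra.
Qed.

Lemma ratioA c d x y : 0 < c -> 0 < d -> c * d <= 1 -> 0 < y <= x -> x < 1 ->
  hypF c d (c + d) x * (- ln (1 - y) / y) <= hypF c d (c + d) y * (- ln (1 - x) / x).
Proof.
  intros Hc Hd Hcd Hy Hx.
  apply (ratio_lim (Aco c d) (fun n => / INR (S n)) x y); auto.
  - intros m n Hmn. destruct (Aco_mono c d m n Hc Hd Hcd Hmn) as [_ H].
    assert (0 < INR (S m)) by (apply lt_0_INR; lia).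
    assert (0 < INR (S n)) by (apply lt_0_INR; lia).
    replace (Aco c d n * / INR (S m)) with ((INR (S n) * Aco c d n) * (/ INR (S m) * / INR (S n))) by (field; lra).
    replace (Aco c d m * / INR (S n)) with ((INR (S m) * Aco c d m) * (/ INR (S m) * / INR (S n))) by (field; lra).
    apply Rmult_le_compat_r; auto.
    apply Rmult_le_pos; left; apply Rinv_0_lt_compat; auto.
  - apply hyp_sum; auto; lra.
  - apply hyp_sum; auto; lra.
  - apply log_series; lra.
  - apply log_series; lra.
Qed.

Lemma phi_ge_id a b z : 0 < a -> a < 1 -> 1 < b -> 0 < z -> z <= phi a b z.
Proof.
  intros. unfold phi. destruct (Rle_lt_dec z 1).
  - eapply Rle_trans; [|apply Rmax_l]. unfold Rpower.
    rewrite <- (exp_ln z) at 1 by lra. apply exp_le'.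
    assert (ln z <= 0) by (rewrite <- ln_1; apply ln_le'; lra). nra.
  - eapply Rle_trans; [|apply Rmax_r]. unfold Rpower.
    rewrite <- (exp_ln z) at 1 by lra. apply exp_le'.
    assert (0 <= ln z) by (rewrite <- ln_1; apply ln_le'; lra). nra.
Qed.

Lemma phi_pos a b z : 0 < phi a b z.
Proof. unfold phi, Rpower. eapply Rlt_le_trans; [apply exp_pos|apply Rmax_l]. Qed.

Lemma Rpower_pos' u v : 0 < Rpower u v.
Proof. unfold Rpower. apply exp_pos. Qed.

Theorem mainTheorem12 (a b c d x : R) :
  0 < a -> a < 1 -> 1 < b ->
  0 < c -> 0 < d -> c * d <= 1 ->
  0 < x < 1 ->
  gfun c d x <=
  b * phi a b (gfun c d (phiinv a b (x / (1 - x)) / (1 + phiinv a b (x / (1 - x))))).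
Proof.
  intros Ha Ha1 Hb Hc Hd Hcd Hx.
  set (t := x / (1 - x)).
  assert (Ht : 0 < t) by (unfold t; apply Rdiv_lt_0_compat; lra).
  assert (H1x : 1 - x = / (1 + t)) by (unfold t; field; lra).
  assert (Hxt : x = t / (1 + t)) by (unfold t; field; lra).
  set (F := fun z => hypF c d (c + d) z).
  unfold gfun. fold (F x).
  destruct (Rle_lt_dec 1 t) as [Ht1|Ht1].
  -
    set (s := Rpower t (1 / b)).
    assert (Hs : phiinv a b t = s).
    { unfold phiinv. apply Rmin_right. unfold s, Rpower. apply exp_le'.
      assert (0 <= ln t) by (rewrite <- ln_1; apply ln_le'; lra).
      assert (1 / b <= 1 / a).
      { unfold Rdiv. rewrite !Rmult_1_l. apply Rinv_le_contravar; lra. }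
      nra. }
    rewrite Hs.
    assert (Hsb : Rpower s b = t).
    { unfold s. rewrite Rpower_mult. replace (1 / b * b) with 1 by (field; lra).
      apply Rpower_1; lra. }
    assert (Hs1 : 1 <= s).
    { unfold s, Rpower. apply Rle_trans with (exp 0); [rewrite exp_0; lra|]. apply exp_le'.
      assert (0 <= ln t) by (rewrite <- ln_1; apply ln_le'; lra).
      assert (0 < 1 / b) by (apply Rdiv_lt_0_compat; lra). apply Rmult_le_pos; lra. }
    assert (Hst : s <= t).
    { unfold s, Rpower. rewrite <- (exp_ln t) at 2 by lra. apply exp_le'.
      assert (0 <= ln t) by (rewrite <- ln_1; apply ln_le'; lra).
      assert (1 / b <= 1).
      { unfold Rdiv. rewrite Rmult_1_l. rewrite <- Rinv_1. apply Rinv_le_contravar; lra. }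
      nra. }
    set (y := s / (1 + s)).
    assert (Hy : 0 < y <= x).
    { unfold y. rewrite Hxt. split. apply Rdiv_lt_0_compat; lra.
      unfold Rdiv. apply Rmult_le_reg_r with ((1 + s) * (1 + t)). nra.
      replace (s * / (1 + s) * ((1 + s) * (1 + t))) with (s * (1 + t)) by (field; lra).
      replace (t * / (1 + t) * ((1 + s) * (1 + t))) with (t * (1 + s)) by (field; lra).
      nra. }
    assert (H1y : 1 - y = / (1 + s)) by (unfold y; field; lra).
    assert (HR := ratioA c d x y Hc Hd Hcd Hy ltac:(lra)). fold (F x) (F y) in HR.
    rewrite H1x, H1y, !ln_Rinv, !Ropp_involutive in HR by lra.
    assert (HFy := F_bounds c d y Hc Hd Hcd ltac:(split; lra)). fold (F y) in HFy.
    assert (HFx := F_bounds c d x Hc Hd Hcd Hx). fold (F x) in HFx.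
    assert (Hls : 0 < ln (1 + s)) by (rewrite <- ln_1; apply ln_increasing; lra).
    assert (Hlt : ln (1 + t) <= b * ln (1 + s)).
    { assert (E : ln (Rpower (1 + s) b) = b * ln (1 + s)) by (unfold Rpower; apply ln_exp).
      rewrite <- E. apply ln_le'; [lra|].
      rewrite <- Hsb.
      replace b with (1 + (b - 1)) by ring. rewrite !Rpower_plus, !Rpower_1 by lra.
      assert (P1 : 1 <= Rpower s (b - 1)).
      { apply Rle_trans with (Rpower s 0); [rewrite Rpower_O; lra|]. apply Rle_Rpower; lra. }
      assert (P2 : Rpower s (b - 1) <= Rpower (1 + s) (b - 1)).
      { apply Rle_Rpower_l; lra. }
      nra. }
    assert (Hg : x * F x <= b * (y * F y)).
    { assert (HR' : x * F x * ln (1 + s) <= y * F y * ln (1 + t)).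
      { apply Rmult_le_compat_l with (r := x * y) in HR; [|nra].
        replace (x * y * (F x * (ln (1 + s) / y))) with (x * F x * ln (1 + s)) in HR by (field; lra).
        replace (x * y * (F y * (ln (1 + t) / x))) with (y * F y * ln (1 + t)) in HR by (field; lra).
        exact HR. }
      assert (y * F y * ln (1 + t) <= y * F y * (b * ln (1 + s))).
      { apply Rmult_le_compat_l; nra. }
      apply Rmult_le_reg_r with (ln (1 + s)); [lra|]. nra. }
    assert (Hpg := phi_ge_id a b (y * F y) Ha Ha1 Hb ltac:(nra)).
    fold (F y). apply Rle_trans with (b * (y * F y)); [exact Hg|]. apply Rmult_le_compat_l; lra.
  -
    set (s := Rpower t (1 / a)).
    assert (Hlt : ln t < 0) by (rewrite <- ln_1; apply ln_increasing; lra).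
    assert (Hia : 1 <= 1 / a).
    { unfold Rdiv. rewrite Rmult_1_l. rewrite <- Rinv_1. apply Rinv_le_contravar; lra. }
    assert (Hs : phiinv a b t = s).
    { unfold phiinv. apply Rmin_left. unfold s, Rpower. apply exp_le'.
      assert (1 / b <= 1 / a).
      { unfold Rdiv. rewrite !Rmult_1_l. apply Rinv_le_contravar; lra. }
      nra. }
    rewrite Hs.
    assert (Hsa : Rpower s a = t).
    { unfold s. rewrite Rpower_mult. replace (1 / a * a) with 1 by (field; lra).
      apply Rpower_1; lra. }
    assert (Hs0 : 0 < s) by apply Rpower_pos'.
    assert (Hst : s <= t).
    { unfold s, Rpower. rewrite <- (exp_ln t) at 2 by lra. apply exp_le'. nra. }
    set (y := s / (1 + s)).
    assert (Hy : 0 < y <= x).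
    { unfold y. rewrite Hxt. split. apply Rdiv_lt_0_compat; lra.
      unfold Rdiv. apply Rmult_le_reg_r with ((1 + s) * (1 + t)). nra.
      replace (s * / (1 + s) * ((1 + s) * (1 + t))) with (s * (1 + t)) by (field; lra).
      replace (t * / (1 + t) * ((1 + s) * (1 + t))) with (t * (1 + s)) by (field; lra).
      nra. }
    assert (H1y : 1 - y = / (1 + s)) by (unfold y; field; lra).
    assert (HR := ratioB c d x y Hc Hd Hcd Hy ltac:(lra)). fold (F x) (F y) in HR.
    rewrite H1x, H1y, !Rinv_inv in HR.
    assert (HFy := F_bounds c d y Hc Hd Hcd ltac:(split; lra)). fold (F y) in HFy.
    rewrite H1y, Rinv_inv in HFy.
    set (th := F y / (1 + s)).
    assert (Hth : 0 < th <= 1).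
    { unfold th. split. apply Rdiv_lt_0_compat; lra.
      apply Rmult_le_reg_r with (1 + s); [lra|]. unfold Rdiv.
      rewrite Rmult_assoc, Rinv_l by lra. lra. }
    assert (Hgx : x * F x <= t * th).
    { rewrite Hxt at 1. unfold th.
      apply Rmult_le_reg_r with ((1 + t) * (1 + s)); [nra|].
      replace (t / (1 + t) * F x * ((1 + t) * (1 + s))) with (t * (F x * (1 + s))) by (field; lra).
      replace (t * (F y / (1 + s)) * ((1 + t) * (1 + s))) with (t * (F y * (1 + t))) by (field; lra).
      apply Rmult_le_compat_l; lra. }
    assert (Hth2 : th <= Rpower th a).
    { unfold Rpower. rewrite <- (exp_ln th) at 1 by lra. apply exp_le'.
      assert (ln th <= 0) by (rewrite <- ln_1; apply ln_le'; lra). nra. }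
    assert (Hgy : y * F y = s * th) by (unfold th; change (s / (1 + s) * F y = s * (F y / (1 + s))); field; lra).
    fold (F y). rewrite Hgy.
    assert (Hp : t * th <= Rpower (s * th) a).
    { rewrite <- Rpower_mult_distr by lra. rewrite Hsa.
      apply Rmult_le_compat_l; lra. }
    assert (Hp2 : Rpower (s * th) a <= phi a b (s * th)) by apply Rmax_l.
    assert (Hp3 := phi_pos a b (s * th)).
    nra.
Qed.
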